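(* Let $a\in\mathbb{R}$ and let $(c(t))_{t\in\mathbb{R}}$ be a discontinuous bounded complex-valued cosine function (i.e. $c(0)=1$, $c(s+t)+c(s-t)=2c(s)c(t)$ for all $s,t\in\mathbb{R}$, $c$ bounded). Then $$\sup_{t\in\mathbb{R}}|\cos(at)-c(t)|=\limsup_{t\to0}|\cos(at)-c(t)|=2.$$ *)

(* Defs.v *)
From Stdlib Require Import Reals.
From Coquelicot Require Import Coquelicot.
Open Scope R_scope.

Definition is_cosine_function (c : R -> C) : Prop :=
  c 0 = RtoC 1 /\
  forall s t : R, Cplus (c (s + t)) (c (s - t)) = Cmult (Cmult (RtoC 2) (c s)) (c t).

Definition bounded_fun (c : R -> C) : Prop :=
  exists M : R, forall t : R, Cmod (c t) <= M.

Definition discontinuous (c : R -> C) : Prop :=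
  ~ (forall t : R, continuous c t).

Definition sup_all (f : R -> R) : Rbar :=
  Rbar_lub (fun y : Rbar => exists t : R, y = Finite (f t)).

Definition sup_punct (f : R -> R) (x0 d : R) : Rbar :=
  Rbar_lub (fun y : Rbar => exists t : R,
     0 < Rabs (t - x0) < d /\ y = Finite (f t)).

Definition limsup_at (f : R -> R) (x0 : R) : Rbar :=
  Rbar_glb (fun y : Rbar => exists d : R, 0 < d /\ y = sup_punct f x0 d).

(* Main.v *)
Require Import Defs.
From Stdlib Require Import Reals Lra List.
From Coquelicot Require Import Coquelicot.
From Stdlib Require Import Lia Classical ZArith.
Open Scope R_scope.

Definition sg (z : C) := sqrt ((fst z - 1)^2 + snd z ^2) + sqrt ((fst z + 1)^2 + snd z ^2).

Lemma sg_double x y :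
  sg (2*(x^2 - y^2) - 1, 4*x*y) = (sg (x,y))^2 - 2.
Proof.
  unfold sg; cbn [fst snd].
  set (A := (x-1)^2 + y^2). set (B := (x+1)^2+y^2).
  assert (HA : 0 <= A) by (unfold A; apply Rplus_le_le_0_compat; apply pow2_ge_0).
  assert (HB : 0 <= B) by (unfold B; apply Rplus_le_le_0_compat; apply pow2_ge_0).
  assert (sA : sqrt A ^ 2 = A) by (apply pow2_sqrt; lra).
  assert (sB : sqrt B ^ 2 = B) by (apply pow2_sqrt; lra).
  assert (pA := sqrt_pos A). assert (pB := sqrt_pos B).
  replace ((2 * (x ^ 2 - y ^ 2) - 1 - 1) ^ 2 + (4 * x * y) ^ 2) with ((2 * sqrt A * sqrt B)^2).
  2:{ replace ((2 * sqrt A * sqrt B)^2) with (4 * sqrt A ^2 * sqrt B ^2) by ring.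
      rewrite sA, sB. unfold A, B. ring. }
  replace ((2 * (x ^ 2 - y ^ 2) - 1 + 1) ^ 2 + (4 * x * y) ^ 2) with ((2*(x^2+y^2))^2) by ring.
  rewrite !sqrt_pow2.
  - replace ((sqrt A + sqrt B) ^ 2) with (sqrt A ^2 + sqrt B^2 + 2 * sqrt A * sqrt B) by ring.
    rewrite sA, sB. unfold A, B. ring.
  - nra.
  - nra.
Qed.

Lemma sg_ge2 z : 2 <= sg z.
Proof.
  destruct z as [x y]. unfold sg; cbn [fst snd].
  assert (H1 : Rabs (x - 1) <= sqrt ((x-1)^2 + y^2)).
  { rewrite <- sqrt_Rsqr_abs. apply sqrt_le_1_alt. unfold Rsqr. nra. }
  assert (H2 : Rabs (x + 1) <= sqrt ((x+1)^2 + y^2)).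
  { rewrite <- sqrt_Rsqr_abs. apply sqrt_le_1_alt. unfold Rsqr. nra. }
  assert (Rabs (x-1) + Rabs (x+1) >= 2).
  { unfold Rabs; destruct (Rcase_abs (x-1)); destruct (Rcase_abs (x+1)); lra. }
  lra.
Qed.

Lemma sg_eq2 z : sg z = 2 -> snd z = 0 /\ -1 <= fst z <= 1.
Proof.
  destruct z as [x y]. unfold sg; cbn [fst snd]. intros H.
  set (A := (x-1)^2 + y^2) in *. set (B := (x+1)^2+y^2) in *.
  assert (HA : 0 <= A) by (unfold A; apply Rplus_le_le_0_compat; apply pow2_ge_0).
  assert (HB : 0 <= B) by (unfold B; apply Rplus_le_le_0_compat; apply pow2_ge_0).
  assert (sA : sqrt A ^ 2 = A) by (apply pow2_sqrt; lra).
  assert (sB : sqrt B ^ 2 = B) by (apply pow2_sqrt; lra).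
  assert (pA := sqrt_pos A). assert (pB := sqrt_pos B).
  set (p := sqrt A) in *. set (s := sqrt B) in *.
  assert (E : s - p = 2 * x).
  { assert ((s - p) * (s + p) = 4 * x) by (replace ((s-p)*(s+p)) with (s^2 - p^2) by ring; rewrite sA, sB; unfold A, B; ring).
    assert (Hsp : s + p = 2) by lra. rewrite Hsp in H0. lra. }
  assert (Ep : p = 1 - x) by lra.
  assert (Es : s = 1 + x) by lra.
  split.
  - rewrite Ep in sA. unfold A in sA. nra.
  - lra.
Qed.

Lemma sg_bound z : sg z <= 2 * Cmod z + 2.
Proof.
  destruct z as [x y]. unfold sg, Cmod; cbn [fst snd].
  set (N := x ^ 2 + y ^ 2).
  assert (HN : 0 <= N) by (unfold N; apply Rplus_le_le_0_compat; apply pow2_ge_0).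
  assert (sN : sqrt N ^ 2 = N) by (apply pow2_sqrt; lra).
  assert (pN := sqrt_pos N).
  assert (H1 : sqrt ((x-1)^2 + y^2) <= sqrt N + 1).
  { rewrite <- (sqrt_pow2 (sqrt N + 1)) by lra. apply sqrt_le_1_alt.
    unfold N in *. nra. }
  assert (H2 : sqrt ((x+1)^2 + y^2) <= sqrt N + 1).
  { rewrite <- (sqrt_pow2 (sqrt N + 1)) by lra. apply sqrt_le_1_alt.
    unfold N in *. nra. }
  lra.
Qed.

Lemma cos_real (c : R -> C) : is_cosine_function c -> bounded_fun c ->
  forall t, snd (c t) = 0 /\ -1 <= fst (c t) <= 1.
Proof.
  intros [H0 HD] [M HM] t.
  assert (Hdbl : forall u, c (u + u) = (2*(fst (c u)^2 - snd (c u)^2) - 1, 4*fst (c u)*snd (c u))).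
  { intros u. specialize (HD u u). replace (u - u) with 0 in HD by ring.
    rewrite H0 in HD. destruct (c u) as [x y]. destruct (c (u+u)) as [x' y'].
    unfold Cplus, Cmult, RtoC in HD; simpl in HD. injection HD; intros E2 E1.
    f_equal; simpl; nra. }
  assert (Hs : forall u, sg (c (u + u)) = sg (c u) ^2 - 2).
  { intros u. rewrite Hdbl. destruct (c u) as [x y]. simpl. apply sg_double. }
  set (d := sg (c t) - 2).
  assert (Hd : 0 <= d) by (unfold d; generalize (sg_ge2 (c t)); lra).
  assert (Hk : forall k : nat, (INR k + 1) * d <= sg (c (t * 2^k)) - 2).
  { induction k.
    - simpl. replace (t * 1) with t by ring. unfold d. lra.
    - replace (t * 2 ^ S k) with (t * 2^k + t * 2^k) by (simpl; ring).
      rewrite Hs. rewrite S_INR.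
      assert (G := sg_ge2 (c (t * 2^k))).
      set (z := sg (c (t * 2 ^ k))) in *. assert (0 <= INR k) by apply pos_INR. assert (0 <= (z-2)^2) by apply pow2_ge_0. nra. }
  assert (Hd0 : d = 0).
  { destruct (Rle_lt_or_eq_dec 0 d Hd) as [Hlt|]; [|auto].
    exfalso.
    destruct (nfloor_ex ((2 * M) / d)) as [k Hk'].
    { assert (0 <= M) by (generalize (HM 0) (Cmod_ge_0 (c 0)); lra).
      apply Rdiv_le_0_compat; lra. }
    specialize (Hk k). assert (B := sg_bound (c (t * 2^k))). specialize (HM (t * 2^k)).
    assert ((INR k + 1) * d > 2 * M).
    { destruct Hk' as [_ Hk2]. apply Rmult_lt_compat_r with (r := d) in Hk2; [|lra].
      unfold Rdiv in Hk2. rewrite Rmult_assoc, Rinv_l in Hk2; lra. }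
    lra. }
  apply sg_eq2. unfold d in Hd0. lra.
Qed.

Lemma cont_RtoC (f: R->R) x :
  (forall eps, 0 < eps -> exists d, 0 < d /\ forall y, Rabs (y - x) < d -> Rabs (f y - f x) < eps) ->
  continuous (fun t => RtoC (f t)) x.
Proof.
  intros H. unfold continuous. apply filterlim_locally. intros eps.
  destruct (H eps (cond_pos eps)) as [d [Hd Hy]].
  exists (mkposreal d Hd). intros y Hb. split.
  - simpl. unfold ball in Hb; simpl in Hb. unfold AbsRing_ball, abs, minus, plus, opp in *; simpl in *.
    apply Hy. exact Hb.
  - simpl. unfold AbsRing_ball, abs, minus, plus, opp; simpl. 
    apply ball_center.
Qed.

Definition frc (x : R) := x - IZR (Int_part x).

Lemma frc_bnd x : 0 <= frc x < 1.
Proof. unfold frc. destruct (base_Int_part x). lra. Qed.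

Lemma Int_part_bnd v (Q : nat) : 0 <= v < INR Q -> (0 <= Int_part v)%Z /\ (Int_part v < Z.of_nat Q)%Z.
Proof.
  intros Hv. destruct (base_Int_part v) as [H1 H2]. split.
  - assert (-1 < IZR (Int_part v)) by lra. apply lt_IZR in H. lia.
  - assert (IZR (Int_part v) < IZR (Z.of_nat Q)) by (rewrite <- INR_IZR_INZ; lra).
    apply lt_IZR in H. lia.
Qed.

Lemma dirichlet y (Q : nat) : (1 <= Q)%nat ->
  exists q p, (1 <= q <= Q)%nat /\ Rabs (INR q * y - IZR p) < / INR Q.
Proof.
  intros HQ.
  assert (HQr : 0 < INR Q) by (apply lt_0_INR; lia).
  set (box := fun j : nat => Z.to_nat (Int_part (INR Q * frc (INR j * y)))).
  assert (Hbox : forall j, (0 <= Int_part (INR Q * frc (INR j * y)))%Z /\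
                          (Int_part (INR Q * frc (INR j * y)) < Z.of_nat Q)%Z).
  { intros j. apply Int_part_bnd. destruct (frc_bnd (INR j * y)). split; nra. }
  assert (Hnd : ~ NoDup (map box (seq 0 (S Q)))).
  { intros Hn. assert (Hi : incl (map box (seq 0 (S Q))) (seq 0 Q)).
    { intros z Hz. apply in_map_iff in Hz. destruct Hz as [j [Hj _]]. subst z.
      apply in_seq. unfold box. destruct (Hbox j). lia. }
    assert (L := NoDup_incl_length Hn Hi). rewrite length_map, !length_seq in L. lia. }
  assert (HFP : ~ ForallPairs (fun a b => box a = box b -> a = b) (seq 0 (S Q))).
  { intros HF. apply Hnd. apply NoDup_map_NoDup_ForallPairs; auto. apply seq_NoDup. }
  unfold ForallPairs in HFP.
  apply not_all_ex_not in HFP. destruct HFP as [a HFP].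
  apply not_all_ex_not in HFP. destruct HFP as [b HFP].
  apply imply_to_and in HFP. destruct HFP as [Ha HFP].
  apply imply_to_and in HFP. destruct HFP as [Hb HFP].
  apply imply_to_and in HFP. destruct HFP as [Hab Hne].
  apply in_seq in Ha. apply in_seq in Hb.
  assert (Hk : Int_part (INR Q * frc (INR a * y)) = Int_part (INR Q * frc (INR b * y))).
  { unfold box in Hab. destruct (Hbox a), (Hbox b). apply Z2Nat.inj; auto. }
  assert (Hclose : Rabs (frc (INR b * y) - frc (INR a * y)) < / INR Q).
  { destruct (base_Int_part (INR Q * frc (INR a * y))) as [A1 A2].
    destruct (base_Int_part (INR Q * frc (INR b * y))) as [B1 B2].
    rewrite Hk in A1, A2.
    assert (Rabs (INR Q * frc (INR b * y) - INR Q * frc (INR a * y)) < 1).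
    { apply Rabs_def1; lra. }
    rewrite <- Rmult_minus_distr_l, Rabs_mult, Rabs_right in H by lra.
    apply Rmult_lt_reg_l with (INR Q); auto. rewrite Rinv_r; lra. }
  destruct (Nat.lt_ge_cases a b) as [Hlt | Hge].
  - exists (b - a)%nat, (Int_part (INR b * y) - Int_part (INR a * y))%Z.
    split; [lia|]. rewrite minus_INR by lia. rewrite minus_IZR.
    unfold frc in Hclose. replace ((INR b - INR a) * y - (IZR (Int_part (INR b * y)) - IZR (Int_part (INR a * y))))
      with (INR b * y - IZR (Int_part (INR b * y)) - (INR a * y - IZR (Int_part (INR a * y)))) by ring.
    exact Hclose.
  - assert (b < a)%nat by lia.
    exists (a - b)%nat, (Int_part (INR a * y) - Int_part (INR b * y))%Z.
    split; [lia|]. rewrite minus_INR by lia. rewrite minus_IZR.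
    unfold frc in Hclose. rewrite Rabs_minus_sym in Hclose.
    replace ((INR a - INR b) * y - (IZR (Int_part (INR a * y)) - IZR (Int_part (INR b * y))))
      with (INR a * y - IZR (Int_part (INR a * y)) - (INR b * y - IZR (Int_part (INR b * y)))) by ring.
    exact Hclose.
Qed.

Lemma PI_gt3 : 3 < PI.
Proof. generalize PI2_3_2. lra. Qed.

Lemma cos_Zper x z : cos (x + 2 * IZR z * PI) = cos x.
Proof.
  destruct (Z_le_gt_dec 0 z) as [Hz|Hz].
  - rewrite <- (Z2Nat.id z Hz). rewrite <- INR_IZR_INZ. apply cos_period.
  - assert (Hz' : (0 <= - z)%Z) by lia.
    rewrite <- (cos_neg x).
    replace (x + 2 * IZR z * PI) with (- (- x + 2 * IZR (- z) * PI)) by (rewrite opp_IZR; ring).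
    rewrite cos_neg. rewrite <- (Z2Nat.id (- z) Hz'). rewrite <- INR_IZR_INZ. apply cos_period.
Qed.

Lemma cos_abs x : cos (Rabs x) = cos x.
Proof. unfold Rabs. destruct (Rcase_abs x); [apply cos_neg | reflexivity]. Qed.

Lemma sin_sq_le y : sin y * sin y <= y * y.
Proof.
  assert (Hp : forall z, 0 <= z -> Rabs (sin z) <= z).
  { intros z Hz. destruct (Rle_lt_dec 1 z).
    - generalize (SIN_bound z). intros. apply Rabs_le. lra.
    - destruct (Req_dec z 0). subst. rewrite sin_0, Rabs_R0. lra.
      assert (0 <= sin z) by (apply sin_ge_0; generalize PI_gt3; lra).
      rewrite Rabs_right by lra. generalize (sin_lt_x z). lra. }
  destruct (Rle_lt_dec 0 y).
  - specialize (Hp y r). assert (Rabs (sin y) * Rabs (sin y) <= y * y).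
    { apply Rmult_le_compat; auto; apply Rabs_pos. }
    rewrite <- Rabs_mult, Rabs_right in H; auto. apply Rle_ge. nra.
  - specialize (Hp (- y)). rewrite sin_neg, Rabs_Ropp in Hp. specialize (Hp ltac:(lra)).
    assert (Rabs (sin y) * Rabs (sin y) <= (-y) * (-y)).
    { apply Rmult_le_compat; auto; apply Rabs_pos. }
    rewrite <- Rabs_mult, Rabs_right in H; [nra|]. apply Rle_ge. nra.
Qed.

Lemma cos_lb x : 1 - x * x / 2 <= cos x.
Proof.
  replace x with (2 * (x / 2)) at 3 by field. rewrite cos_2a_sin.
  generalize (sin_sq_le (x/2)). intros. nra.
Qed.

Lemma div_fact (Q q : nat) : (1 <= q <= Q)%nat -> exists k, Factorial.fact Q = (k * q)%nat.
Proof.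
  induction Q; intros H; [lia|].
  destruct (Nat.eq_dec q (S Q)).
  - subst. exists (Factorial.fact Q). simpl. lia.
  - destruct IHQ as [k Hk]; [lia|]. exists (S Q * k)%nat. rewrite fact_simpl, Hk. lia.
Qed.

Section Real.
Variable f : R -> R.
Hypothesis Hf0 : f 0 = 1.
Hypothesis HfD : forall s t, f (s + t) + f (s - t) = 2 * f s * f t.
Hypothesis Hfb : forall t, -1 <= f t <= 1.

Lemma cheb u b : f u = cos b -> forall n, f (INR n * u) = cos (INR n * b).
Proof.
  intros Hu.
  assert (forall n, f (INR n * u) = cos (INR n * b) /\ f (INR (S n) * u) = cos (INR (S n) * b)).
  { induction n.
    - simpl. rewrite !Rmult_0_l, !Rmult_1_l. rewrite cos_0. auto.
    - destruct IHn as [I1 I2]. split; auto.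
      assert (E1 := HfD (INR (S n) * u) u).
      replace (INR (S n) * u + u) with (INR (S (S n)) * u) in E1 by (rewrite (S_INR (S n)); ring).
      replace (INR (S n) * u - u) with (INR n * u) in E1 by (rewrite (S_INR n); ring).
      assert (E2 : cos (INR (S (S n)) * b) + cos (INR n * b) = 2 * cos (INR (S n) * b) * cos b).
      { replace (INR (S (S n)) * b) with (INR (S n) * b + b) by (rewrite (S_INR (S n)); ring).
        replace (INR n * b) with (INR (S n) * b - b) by (rewrite (S_INR n); ring).
        rewrite cos_plus, cos_minus. ring. }
      rewrite I1, I2, Hu in E1. lra. }
  intros n. apply H.
Qed.

Lemma main_bound d eps : 0 < d -> 0 < eps ->
  (forall t, Rabs t < d -> -1 + eps <= f t) ->
  forall t, Rabs t <= d -> cos (PI * Rabs t / d) <= f t.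
Proof.
  intros Hd He H t Ht.
  destruct (Req_dec t 0) as [->|Ht0].
  { rewrite Hf0. apply COS_bound. }
  assert (HPI := PI_gt3).
  set (mu := Rmin eps 1).
  assert (Hmu : 0 < mu) by (unfold mu; apply Rmin_glb_lt; lra).
  assert (Hmu1 : mu <= 1) by apply Rmin_r.
  assert (Hmue : mu <= eps) by apply Rmin_l.
  destruct (nfloor_ex (2 * PI / mu)) as [Q0 HQ0].
  { apply Rdiv_le_0_compat; lra. }
  set (Q := S Q0).
  assert (HQ : 2 * PI / mu < INR Q) by (unfold Q; rewrite S_INR; lra).
  assert (HQp : 0 < INR Q) by (apply Rle_lt_trans with (2 * PI / mu); auto; apply Rdiv_le_0_compat; lra).
  set (th := 2 * PI / INR Q).
  assert (Hth0 : 0 < th) by (unfold th; apply Rdiv_lt_0_compat; lra).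
  assert (Hthmu : th < mu).
  { unfold th. apply Rmult_lt_reg_r with (INR Q); auto. unfold Rdiv. rewrite Rmult_assoc, Rinv_l by lra.
    apply Rmult_lt_reg_r with (/ mu). apply Rinv_0_lt_compat; lra.
    replace (mu * INR Q * / mu) with (INR Q) by (field; lra). unfold Rdiv in HQ. lra. }
  assert (Hcth : 1 - eps < cos th).
  { generalize (cos_lb th). intros. assert (th * th <= th) by nra. nra. }
  set (m := Factorial.fact Q).
  assert (Hm : 0 < INR m) by apply INR_fact_lt_0.
  set (u := t / INR m).
  assert (Hu0 : 0 < Rabs u).
  { apply Rabs_pos_lt. unfold u. intro. apply Ht0. apply Rmult_eq_reg_r with (/ INR m).
    unfold Rdiv in H0. lra. apply Rinv_neq_0_compat; lra. }
  set (b := acos (f u)).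
  assert (Hb : f u = cos b) by (unfold b; rewrite cos_acos; auto).
  destruct (dirichlet (b / (2 * PI)) Q) as [q [p [Hq Hqp]]]; [unfold Q; lia|].
  set (e := INR q * b - 2 * PI * IZR p).
  assert (He_th : Rabs e < th).
  { unfold e, th. replace (INR q * b - 2 * PI * IZR p) with (2 * PI * (INR q * (b / (2 * PI)) - IZR p)) by (field; lra).
    rewrite Rabs_mult, Rabs_right by lra. unfold Rdiv at 2. apply Rmult_lt_compat_l; lra. }
  assert (Hqr : 1 <= INR q) by (replace 1 with (INR 1) by reflexivity; apply le_INR; lia).
  set (w := INR q * Rabs u).
  assert (Hw : 0 < w) by (unfold w; nra).
  assert (K : forall i : nat, INR i * w < d -> -1 + eps <= cos (INR i * e)).
  { intros i Hi.
    replace (INR i * e) with (INR (i * q) * b + 2 * IZR (- (Z.of_nat i * p)) * PI)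
      by (unfold e; rewrite mult_INR, opp_IZR, mult_IZR, <- INR_IZR_INZ; ring).
    rewrite cos_Zper. rewrite <- (cheb u b Hb). apply H.
    rewrite Rabs_mult, Rabs_right by (apply Rle_ge, pos_INR).
    rewrite mult_INR. unfold w in Hi. lra. }
  assert (Sw : Rabs e <= PI * w / d).
  { destruct (Rle_lt_dec (Rabs e) (PI * w / d)) as [|Hlt]; auto. exfalso.
    assert (Hep : 0 < Rabs e).
    { apply Rle_lt_trans with (PI * w / d); auto. apply Rdiv_le_0_compat; nra. }
    destruct (nfloor_ex (PI / Rabs e)) as [i Hi]. { apply Rdiv_le_0_compat; lra. }
    assert (Hie1 : INR i * Rabs e <= PI).
    { destruct Hi as [Hi _]. apply Rmult_le_compat_r with (r := Rabs e) in Hi; [|lra].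
      unfold Rdiv in Hi. rewrite Rmult_assoc, Rinv_l in Hi; lra. }
    assert (Hie2 : PI - Rabs e < INR i * Rabs e).
    { destruct Hi as [_ Hi]. apply Rmult_lt_compat_r with (r := Rabs e) in Hi; [|lra].
      unfold Rdiv in Hi. rewrite Rmult_assoc, Rinv_l in Hi; lra. }
    assert (Hiw : INR i * w < d).
    { destruct Hi as [Hi _].
      assert (PI * w < d * Rabs e).
      { apply Rmult_lt_compat_r with (r := d) in Hlt; auto. unfold Rdiv in Hlt.
        rewrite Rmult_assoc, Rinv_l in Hlt; lra. }
      apply Rmult_le_compat_r with (r := w) in Hi; [|lra].
      apply Rle_lt_trans with (PI / Rabs e * w); auto.
      apply Rmult_lt_reg_r with (Rabs e); auto.
      replace (PI / Rabs e * w * Rabs e) with (PI * w) by (field; lra). lra. }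
    specialize (K i Hiw).
    assert (Hpi0 : 0 <= INR i) by apply pos_INR.
    rewrite <- cos_abs, Rabs_mult, (Rabs_right (INR i)) in K by (apply Rle_ge, pos_INR).
    assert (C1 : cos (INR i * Rabs e) <= cos (PI - Rabs e)).
    { apply cos_decr_1; try lra; nra. }
    rewrite Rtrigo_facts.cos_pi_minus in C1.
    assert (C2 : cos th <= cos (Rabs e)).
    { apply cos_decr_1; lra. }
    lra. }
  destruct (div_fact Q q) as [k Hk]; [unfold Q in *; lia|].
  assert (Ft : f t = cos (INR m * b)).
  { rewrite <- (cheb u b Hb). f_equal. unfold u; field; lra. }
  rewrite Ft.
  replace (INR m * b) with (INR k * e + 2 * IZR (Z.of_nat k * p) * PI)
    by (unfold m; rewrite Hk, mult_INR; unfold e; rewrite mult_IZR, <- INR_IZR_INZ; ring).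
  rewrite cos_Zper, <- (cos_abs (INR k * e)).
  assert (Hke : Rabs (INR k * e) <= PI * Rabs t / d).
  { rewrite Rabs_mult, (Rabs_right (INR k)) by (apply Rle_ge, pos_INR).
    assert (Et : Rabs t = INR k * w).
    { unfold w. replace t with (INR m * u) by (unfold u; field; lra).
      rewrite Rabs_mult, Rabs_right by lra. unfold m. rewrite Hk, mult_INR. ring. }
    rewrite Et. assert (0 <= INR k) by apply pos_INR.
    apply Rle_trans with (INR k * (PI * w / d)). apply Rmult_le_compat_l; auto.
    right. field. lra. }
  assert (A1 : 0 <= Rabs (INR k * e)) by apply Rabs_pos.
  assert (A2 : 0 <= PI * Rabs t / d).
  { apply Rdiv_le_0_compat; [|lra]. generalize (Rabs_pos t). nra. }
  assert (A3 : PI * Rabs t / d <= PI).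
  { assert (Rabs t / d <= 1).
    { apply Rmult_le_reg_r with d; auto. unfold Rdiv. rewrite Rmult_assoc, Rinv_l by lra. lra. }
    replace (PI * Rabs t / d) with (PI * (Rabs t / d)) by (field; lra). nra. }
  apply cos_decr_1; lra.
Qed.
End Real.
Section Real2.
Variable f : R -> R.
Hypothesis Hf0 : f 0 = 1.
Hypothesis HfD : forall s t, f (s + t) + f (s - t) = 2 * f s * f t.
Hypothesis Hfb : forall t, -1 <= f t <= 1.

Lemma f_double x : f (x + x) = 2 * f x * f x - 1.
Proof. assert (E := HfD x x). replace (x - x) with 0 in E by ring. rewrite Hf0 in E. lra. Qed.

Lemma cont_f d eps : 0 < d -> 0 < eps ->
  (forall t, Rabs t < d -> -1 + eps <= f t) ->
  forall s eta, 0 < eta -> exists rho, 0 < rho /\ forall y, Rabs (y - s) < rho -> Rabs (f y - f s) < eta.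
Proof.
  intros Hd He H s eta Heta.
  assert (HPI := PI_gt3).
  set (e1 := Rmin eta 1).
  assert (He1 : 0 < e1) by (unfold e1; apply Rmin_glb_lt; lra).
  assert (He1a : e1 <= eta) by apply Rmin_l.
  assert (He1b : e1 <= 1) by apply Rmin_r.
  exists (Rmin d (d * e1 / (2 * PI))). split.
  { apply Rmin_glb_lt; auto. apply Rdiv_lt_0_compat; nra. }
  intros y Hy. set (h := y - s).
  assert (Hh1 : Rabs h < d) by (apply Rlt_le_trans with (1 := Hy); apply Rmin_l).
  assert (Hh2 : Rabs h < d * e1 / (2 * PI)) by (apply Rlt_le_trans with (1 := Hy); apply Rmin_r).
  assert (Bh := main_bound f Hf0 HfD Hfb d eps Hd He H h ltac:(lra)).
  assert (Cl := cos_lb (PI * Rabs h / d)).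
  set (x := PI * Rabs h / d) in *.
  assert (Hx0 : 0 <= x) by (unfold x; apply Rdiv_le_0_compat; [generalize (Rabs_pos h); nra | lra]).
  assert (Hx : x < e1 / 2).
  { unfold x. apply Rmult_lt_reg_r with (d / PI). apply Rdiv_lt_0_compat; lra.
    replace (PI * Rabs h / d * (d / PI)) with (Rabs h) by (field; lra).
    replace (e1 / 2 * (d / PI)) with (d * e1 / (2 * PI)) by (field; lra). exact Hh2. }
  set (G := f h) in *. set (F := f s). set (P := f y). set (M := f (s - h)).
  assert (HP : P = f (s + h)) by (unfold P, h; f_equal; ring).
  assert (E1 : P + M = 2 * F * G) by (rewrite HP; apply HfD).
  assert (E2 : f (s + s) + f (h + h) = 2 * P * M).
  { rewrite HP. unfold M. rewrite <- HfD. f_equal; f_equal; ring. }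
  rewrite !f_double in E2. fold F G in E2.
  assert (HF := Hfb s). assert (HG := Hfb h). fold F in HF. fold G in HG.
  assert (w1 : 1 - G < e1 * e1 / 8) by nra.
  assert (w0 : 0 <= 1 - G) by lra.
  assert (Sq : (P - M) * (P - M) = 4 * (1 - F * F) * (1 - G * G)).
  { replace ((P - M) * (P - M)) with ((P + M) * (P + M) - 4 * (P * M)) by ring.
    rewrite E1. replace (4 * (P * M)) with (2 * (2 * P * M)) by ring. rewrite <- E2. ring. }
  assert (Sq2 : (P - M) * (P - M) < e1 * e1).
  { rewrite Sq. assert (0 <= 1 - F * F) by nra. assert (1 - F * F <= 1) by nra.
    assert (0 <= 1 - G * G) by nra. assert (1 - G * G <= 2 * (1 - G)) by nra.
    assert (4 * (1 - F * F) * (1 - G * G) <= 4 * (1 - G * G)).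
    { replace (4 * (1 - G * G)) with (4 * 1 * (1 - G * G)) by ring.
      apply Rmult_le_compat_r; lra. }
    lra. }
  assert (Hpm : Rabs (P - M) < e1).
  { apply Rabs_def1; nra. }
  replace (P - F) with (F * (G - 1) + (P - M) / 2) by (field_simplify; nra).
  apply Rle_lt_trans with (Rabs (F * (G - 1)) + Rabs ((P - M) / 2)); [apply Rabs_triang|].
  rewrite Rabs_mult. unfold Rdiv. rewrite Rabs_mult, (Rabs_right (/ 2)) by lra.
  assert (Rabs F <= 1) by (apply Rabs_le; lra).
  assert (Rabs (G - 1) = 1 - G) by (rewrite Rabs_minus_sym; apply Rabs_right; lra).
  rewrite H1. assert (0 <= Rabs F) by apply Rabs_pos. nra.
Qed.
End Real2.
Lemma lub2 (E : Rbar -> Prop) :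
  (forall y, E y -> exists r, y = Finite r /\ r <= 2) ->
  (forall eps, 0 < eps -> exists r, E (Finite r) /\ 2 - eps < r) ->
  Rbar_lub E = Finite 2.
Proof.
  intros H1 H2. apply Rbar_is_lub_unique. split.
  - intros y Hy. destruct (H1 y Hy) as [r [-> Hr]]. simpl. exact Hr.
  - intros b Hb. destruct b as [r| |]; simpl.
    + destruct (Rle_lt_dec 2 r); auto. exfalso.
      destruct (H2 (2 - r)) as [r' [Hr' Hlt]]; [lra|].
      specialize (Hb _ Hr'). simpl in Hb. lra.
    + trivial.
    + destruct (H2 1) as [r' [Hr' _]]; [lra|]. specialize (Hb _ Hr'). simpl in Hb. exact Hb.
Qed.

Lemma sup_limsup2 (g : R -> R) :
  (forall t, g t <= 2) ->
  (forall d eps, 0 < d -> 0 < eps -> exists t, 0 < Rabs t < d /\ 2 - eps < g t) ->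
  sup_all g = Finite 2 /\ limsup_at g 0 = Finite 2.
Proof.
  intros Hu Hl.
  assert (Hp : forall d, 0 < d -> sup_punct g 0 d = Finite 2).
  { intros d Hd. unfold sup_punct. apply lub2.
    - intros y [t [_ ->]]. exists (g t). auto.
    - intros eps He. destruct (Hl d eps Hd He) as [t [Ht Hg]]. exists (g t). split; auto.
      exists t. rewrite Rminus_0_r. auto. }
  split.
  - unfold sup_all. apply lub2.
    + intros y [t ->]. exists (g t). auto.
    + intros eps He. destruct (Hl 1 eps ltac:(lra) He) as [t [Ht Hg]]. exists (g t). split; eauto.
  - unfold limsup_at. apply Rbar_is_glb_unique. split.
    + intros y [d [Hd ->]]. rewrite (Hp d Hd). simpl. lra.
    + intros b Hb. apply Hb. exists 1. split; [lra|]. rewrite Hp; auto; lra.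
Qed.

Theorem corollary3p2 (a : R) (c : R -> C) :
  is_cosine_function c -> bounded_fun c -> discontinuous c ->
  sup_all (fun t => Cmod (Cminus (RtoC (cos (a * t))) (c t))) = Finite 2 /\
  limsup_at (fun t => Cmod (Cminus (RtoC (cos (a * t))) (c t))) 0 = Finite 2.
Proof.
  intros Hc Hb Hdisc.
  assert (Hr := cos_real c Hc Hb).
  set (f := fun t => fst (c t)).
  assert (Hct : forall t, c t = RtoC (f t)).
  { intros t. unfold f, RtoC. destruct (Hr t) as [Hs _]. destruct (c t) as [x y]. simpl in *. subst. reflexivity. }
  destruct Hc as [Hc0 HcD].
  assert (Hf0 : f 0 = 1) by (unfold f; rewrite Hc0; reflexivity).
  assert (HfD : forall s t, f (s + t) + f (s - t) = 2 * f s * f t).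
  { intros s t. specialize (HcD s t). rewrite !Hct in HcD. apply (f_equal fst) in HcD.
    simpl in HcD. rewrite HcD. ring. }
  assert (Hfb : forall t, -1 <= f t <= 1) by (intros t; apply (Hr t)).
  assert (Hnear : forall d eps, 0 < d -> 0 < eps -> exists t, Rabs t < d /\ f t < -1 + eps).
  { intros d eps Hd He. apply NNPP. intros Hn. apply Hdisc. intros x.
    assert (H : forall t, Rabs t < d -> -1 + eps <= f t).
    { intros t Ht. destruct (Rle_lt_dec (-1 + eps) (f t)); auto. exfalso. apply Hn. exists t. auto. }
    apply continuous_ext with (f := fun t => RtoC (f t)).
    { intros t. symmetry. apply Hct. }
    apply cont_RtoC. intros eta Heta.
    exact (cont_f f Hf0 HfD Hfb d eps Hd He H x eta Heta). }
  assert (Hg : forall t, Cmod (Cminus (RtoC (cos (a * t))) (c t)) = Rabs (cos (a * t) - f t)).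
  { intros t. rewrite Hct. rewrite <- Cmod_R. f_equal. unfold Cminus, Cplus, Copp, RtoC. simpl. f_equal; ring. }
  apply sup_limsup2.
  - intros t. rewrite Hg. generalize (COS_bound (a * t)) (Hfb t). intros.
    apply Rle_trans with (Rabs (cos (a * t)) + Rabs (f t)). 
    + unfold Rminus. rewrite <- (Rabs_Ropp (f t)). apply Rabs_triang.
    + assert (Rabs (cos (a * t)) <= 1) by (apply Rabs_le; lra).
      assert (Rabs (f t) <= 1) by (apply Rabs_le; lra). lra.
  - intros d eps Hd He.
    set (r := Rabs a + 1).
    assert (Hr0 : 0 < r) by (unfold r; generalize (Rabs_pos a); lra).
    set (d' := Rmin d (Rmin (1 / r) (eps / (2 * r)))).
    assert (Hd' : 0 < d').
    { unfold d'. apply Rmin_glb_lt; auto. apply Rmin_glb_lt; apply Rdiv_lt_0_compat; lra. }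
    destruct (Hnear d' (Rmin (eps / 2) 1) Hd') as [t [Ht Hft]].
    { apply Rmin_glb_lt; lra. }
    assert (Hm1 : Rmin (eps / 2) 1 <= 1) by apply Rmin_r.
    assert (Hm2 : Rmin (eps / 2) 1 <= eps / 2) by apply Rmin_l.
    assert (Hd1 : d' <= d) by apply Rmin_l.
    assert (Hd2 : d' <= 1 / r) by (eapply Rle_trans; [apply Rmin_r | apply Rmin_l]).
    assert (Hd3 : d' <= eps / (2 * r)) by (eapply Rle_trans; [apply Rmin_r | apply Rmin_r]).
    exists t. split.
    + split; [|lra]. apply Rabs_pos_lt. intros ->. rewrite Hf0 in Hft. lra.
    + rewrite Hg.
      assert (Hat : Rabs (a * t) <= r * Rabs t).
      { rewrite Rabs_mult. unfold r. generalize (Rabs_pos t). nra. }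
      assert (Hat1 : Rabs (a * t) <= 1).
      { apply Rle_trans with (r * d'); [nra|].
        apply Rle_trans with (r * (1 / r)); [apply Rmult_le_compat_l; lra|]. right. field. lra. }
      assert (Hat2 : Rabs (a * t) <= eps / 2).
      { apply Rle_trans with (r * d'); [nra|].
        apply Rle_trans with (r * (eps / (2 * r))); [apply Rmult_le_compat_l; lra|]. right. field. lra. }
      assert (Hc1 := cos_lb (a * t)).
      assert (Hsq0 : (a * t) * (a * t) = Rabs (a * t) * Rabs (a * t)).
      { rewrite <- Rabs_mult. rewrite Rabs_right; [reflexivity|]. apply Rle_ge. nra. }
      assert (Hsq : (a * t) * (a * t) <= eps / 2).
      { rewrite Hsq0. assert (0 <= Rabs (a * t)) by apply Rabs_pos. nra. }
      apply Rlt_le_trans with (cos (a * t) - f t); [lra | apply Rle_abs].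
Qed.
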